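(* Let $A\subseteq\mathbb{N}$ and $x\in\big(\underline{d}_\infty(A),\overline{d}_\infty(A)\big)$. Then there is a function $\mu:\mathcal{P}(\mathbb{N})\to[0,1]$ of the form $$\mu(E)=\int_{\Omega}\mu_\alpha^{\mathcal{F}}(E)\,\mathrm{d}\psi(\mathcal{F},\alpha),\qquad E\subseteq\mathbb{N},$$ for some Borel probability measure $\psi$ on $\Omega=\beta\mathbb{N}^*\times[-1,\infty)$, which is a density measure and satisfies $\mu(A)=x$.
   Context: $\mathbb{N}=\{1,2,3,\dots\}$. For $A\subseteq\mathbb{N}$ let $A(n)=|A\cap[1,n]|$; $\mathcal{D}$ is the collection of sets for which $d(A)=\lim_{n\to\infty}A(n)/n$ exists. A density measure is a function $\mu:\mathcal{P}(\mathbb{N})\to[0,1]$ with $\mu(\mathbb{N})=1$, finitely additive on disjoint sets, and $\mu=d$ on $\mathcal{D}$. For $\alpha\ge-1$ and $A\subseteq\mathbb{N}$ put $A_\alpha(n)=\sum_{k=1}^n\chi_A(k)k^\alpha$ (so $\mathbb{N}_\alpha(n)=\sum_{k=1}^nk^\alpha$), $\underline{d}_\alpha(A)=\liminf_{n\to\infty}\frac{A_\alpha(n)}{\mathbb{N}_\alpha(n)}$, $\overline{d}_\alpha(A)=\limsup_{n\to\infty}\frac{A_\alpha(n)}{\mathbb{N}_\alpha(n)}$, $\underline{d}_\infty(A)=\inf_{\alpha\ge-1}\underline{d}_\alpha(A)$ and $\overline{d}_\infty(A)=\sup_{\alpha\ge-1}\overline{d}_\alpha(A)$. $\beta\mathbb{N}^*$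 denotes the set of free ultrafilters on $\mathbb{N}$ (with the Stone–Čech topology). For a free ultrafilter $\mathcal{F}$ and a bounded real sequence $(x_n)$, $\mathcal{F}\text{-}\lim x_n$ is the unique $L$ with $\{n;|x_n-L|<\varepsilon\}\in\mathcal{F}$ for all $\varepsilon>0$. Set $\mu_\alpha^{\mathcal{F}}(E)=\mathcal{F}\text{-}\lim\frac{E_\alpha(n)}{\mathbb{N}_\alpha(n)}$. *)

(* Defs.v *)
From HB Require Import structures.
From mathcomp Require Import all_boot all_order all_algebra.
From mathcomp Require Import all_classical all_reals all_analysis.
Set Implicit Arguments. Unset Strict Implicit. Unset Printing Implicit Defensive.
Import Order.TTheory GRing.Theory Num.Theory.
Import numFieldNormedType.Exports.
Local Open Scope classical_set_scope.
Local Open Scope ring_scope.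

(* Encoding of N = {1,2,3,...}: a set E : set nat represents the subset
   {k+1 | k \in E} of N, i.e. the natural number k : nat stands for k+1.
   Sequences indexed by N are likewise written u : nat -> R with u n
   standing for the term of index n+1. *)

Section Densities.
Variable R : realType.

Definition wsum (E : set nat) (alpha : R) (n : nat) : R :=
  \sum_(k < n) (\1_E k : R) * ((k.+1)%:R `^ alpha).

Definition Nsum (alpha : R) (n : nat) : R :=
  \sum_(k < n) ((k.+1)%:R `^ alpha).

Definition ratio (E : set nat) (alpha : R) : nat -> R :=
  fun n => wsum E alpha n.+1 / Nsum alpha n.+1.

Definition lower_d (alpha : R) (E : set nat) : R := limn_inf (ratio E alpha).
Definition upper_d (alpha : R) (E : set nat) : R := limn_sup (ratio E alpha).

Definition lower_d_infty (E : set nat) : R :=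
  inf [set lower_d a E | a in [set a : R | -1 <= a]].
Definition upper_d_infty (E : set nat) : R :=
  sup [set upper_d a E | a in [set a : R | -1 <= a]].

Definition counting (E : set nat) (n : nat) : R := \sum_(k < n) (\1_E k : R).

Definition has_density (E : set nat) (l : R) : Prop :=
  (fun n => counting E n.+1 / n.+1%:R) @ \oo --> l.

Definition density_measure (mu : set nat -> R) : Prop :=
  [/\ (forall E, 0 <= mu E <= 1),
      mu setT = 1,
      (forall E1 E2, E1 `&` E2 = set0 -> mu (E1 `|` E2) = mu E1 + mu E2) &
      (forall E l, has_density E l -> mu E = l)].

Definition free_ultrafilter (F : set (set nat)) : Prop :=
  [/\ ~ F set0, F setT,
      (forall S T, F S -> S `<=` T -> F T),
      (forall S T, F S -> F T -> F (S `&` T)) &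
      ((forall S, F S \/ F (~` S)) /\ (forall S, finite_set S -> ~ F S))].

Definition Flim (F : set (set nat)) (u : nat -> R) : R :=
  xget 0 [set L : R | forall eps : R, 0 < eps -> F [set n | `|u n - L| < eps]].

(* Ambient carrier; Omega = beta N^* x [-1, oo) is the subset OmegaSet. *)
Definition Amb := (set (set nat) * R)%type.

Definition OmegaSet : set Amb :=
  [set w | free_ultrafilter w.1 /\ -1 <= w.2].

(* basic open sets of the product topology on Omega:
   {F in beta N^* | E \in F} x ((a,b) \cap [-1,oo)) *)
Definition rect (E : set nat) (a b : R) : set Amb :=
  [set w | OmegaSet w /\ w.1 E /\ a < w.2 < b].

Definition Omega_open (V : set Amb) : Prop :=
  V `<=` OmegaSet /\
  forall w, V w -> exists E a b, rect E a b w /\ rect E a b `<=` V.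

(* sets whose trace on Omega is open; the sigma-algebra generated by them
   traces on Omega exactly the Borel sets of Omega *)
Definition OmegaG : set (set Amb) := [set U | Omega_open (U `&` OmegaSet)].

Definition OmegaT : measurableType (OmegaG.-sigma) := g_sigma_algebraType OmegaG.

Definition muFa (w : Amb) (E : set nat) : R := Flim w.1 (ratio E w.2).

End Densities.

(* Main.v *)
From Pilot Require Import Defs.
From HB Require Import structures.
From mathcomp Require Import all_boot all_order all_algebra.
From mathcomp Require Import all_classical all_reals all_analysis.
From mathcomp Require Import ring lra zify measurable_realfun.
From mathcomp Require finmap.
Import Order.TTheory GRing.Theory Num.Theory.
Import numFieldNormedType.Exports.
Import Pilot.Defs.
Local Open Scope classical_set_scope.
Local Open Scope ring_scope.

Section Flim.
Variable R : realType.
Implicit Types (F : set (set nat)) (u v : nat -> R).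

Definition FP F u (L : R) := forall eps : R, 0 < eps -> F [set n | `|u n - L| < eps].

Lemma fu_set0 {F} : free_ultrafilter F -> ~ F set0.
Proof. by case. Qed.
Lemma fu_setT {F} : free_ultrafilter F -> F setT.
Proof. by case. Qed.
Lemma fu_up {F S T} : free_ultrafilter F -> F S -> S `<=` T -> F T.
Proof. by case=> _ _ H _ _; apply: H. Qed.
Lemma fu_I {F S T} : free_ultrafilter F -> F S -> F T -> F (S `&` T).
Proof. by case=> _ _ _ H _; apply: H. Qed.
Lemma fu_C {F} S : free_ultrafilter F -> F S \/ F (~` S).
Proof. by case=> _ _ _ _ []. Qed.
Lemma fu_fin {F S} : free_ultrafilter F -> finite_set S -> ~ F S.
Proof. by move=> [_ _ _ _ [_ H]] /H. Qed.

Lemma fu_cofin F (P : set nat) N : free_ultrafilter F ->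
  (forall n, (N <= n)%N -> P n) -> F P.
Proof.
move=> hF HP; case: (fu_C P hF) => // HC; exfalso.
apply: (fu_fin hF _ HC); apply: (sub_finite_set _ (finite_II N)) => n /= Pn.
by rewrite ltnNge; apply/negP => /HP.
Qed.

Lemma FP_unique F u L1 L2 : free_ultrafilter F -> FP F u L1 -> FP F u L2 -> L1 = L2.
Proof.
move=> hF H1 H2; apply/eqP; rewrite -subr_eq0; apply/negP => /negP neq.
have ep : 0 < `|L1 - L2| / 2 by rewrite divr_gt0 // normr_gt0.
have := fu_I hF (H1 _ ep) (H2 _ ep).
have -> : [set n | `|u n - L1| < `|L1 - L2| / 2] `&` [set n | `|u n - L2| < `|L1 - L2| / 2] = set0.
  apply/seteqP; split => // n /= [h1 h2].
  have : `|L1 - L2| < `|L1 - L2| / 2 + `|L1 - L2| / 2.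
    apply: (le_lt_trans (y := `|u n - L1| + `|u n - L2|)); last by rewrite ltrD.
    by rewrite (distrC (u n) L1); apply: le_trans (ler_normD _ _); rewrite addrA subrK.
  by rewrite -splitr ltxx.
by apply: fu_set0.
Qed.

Lemma FP_exists F u : free_ultrafilter F -> (forall n, 0 <= u n <= 1) ->
  exists L, FP F u L.
Proof.
move=> hF u01.
pose Y := [set y : R | F [set n | y <= u n]].
have Y0 : Y 0 by apply: (fu_up hF (fu_setT hF)) => n _ /=; have /andP[] := u01 n.
have Yub : ubound Y 1.
  move=> y Yy; rewrite leNgt; apply/negP => y1; apply: (fu_set0 hF).
  apply: (fu_up hF Yy) => n /= yu; have /andP[_ u1] := u01 n.
  by move: (le_lt_trans u1 y1); rewrite ltNge yu.
have hs : has_sup Y by split; [exists 0 | exists 1].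
exists (sup Y) => eps ep.
have ep2 : 0 < eps / 2 by rewrite divr_gt0.
have [e Ye He] := sup_adherent ep2 hs.
have nY : ~ Y (sup Y + eps / 2).
  move=> /(sup_upper_bound hs); rewrite -subr_ge0 opprD addrA subrr add0r.
  by rewrite oppr_ge0 leNgt ep2.
have HC : F (~` [set n | sup Y + eps / 2 <= u n]).
  by case: (fu_C [set n | sup Y + eps / 2 <= u n] hF).
apply: (fu_up hF (fu_I hF Ye HC)) => n /= [h1 h2].
rewrite ltr_norml; apply/andP; split.
  rewrite ltrBrDl; apply: (lt_le_trans _ h1); apply: le_lt_trans He.
  by rewrite lerD2l lerN2 ler_pdivrMr // ler_pMr // ler1n.
rewrite ltrBlDl; move/negP: h2; rewrite -ltNge => h2.
by apply: (lt_le_trans h2); rewrite lerD2l ler_pdivrMr // ler_pMr // ler1n.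
Qed.

Lemma FlimE F u L : free_ultrafilter F -> FP F u L -> Flim F u = L.
Proof.
move=> hF hL; apply: (@FP_unique F u _ L hF _ hL).
by apply: (xgetPex 0 (P := [set L : R | FP F u L])); exists L.
Qed.

Lemma FP_cvg F u (l : R) : free_ultrafilter F -> u @ \oo --> l -> FP F u l.
Proof.
move=> hF /cvgrPdist_lt H eps ep; case: (H eps ep) => N _ HN.
by apply: (fu_cofin _ _ _ hF) => n /HN /=; rewrite distrC.
Qed.

Lemma FP_add F u v a b : free_ultrafilter F -> FP F u a -> FP F v b ->
  FP F (fun n => u n + v n) (a + b).
Proof.
move=> hF ha hb eps ep; have ep2 : 0 < eps / 2 by rewrite divr_gt0.
apply: (fu_up hF (fu_I hF (ha _ ep2) (hb _ ep2))) => n /= [h1 h2].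
rewrite (splitr eps); apply: le_lt_trans (ltrD h1 h2).
by rewrite opprD addrACA ler_normD.
Qed.

Lemma FP_01 F u L : free_ultrafilter F -> (forall n, 0 <= u n <= 1) -> FP F u L ->
  0 <= L <= 1.
Proof.
move=> hF u01 hL; apply/andP; split.
  rewrite leNgt; apply/negP => L0; apply: (fu_set0 hF).
  apply: (fu_up hF (hL (- L) _)); first by rewrite oppr_gt0.
  move=> n /= h; have /andP[u0 _] := u01 n.
  move: h; rewrite ger0_norm ?subr_ge0 ?(le_trans (ltW L0)) //.
  by rewrite -[X in _ < X]add0r ltrD2r ltNge u0.
rewrite leNgt; apply/negP => L1; apply: (fu_set0 hF).
apply: (fu_up hF (hL (L - 1) _)); first by rewrite subr_gt0.
move=> n /= h; have /andP[_ u1] := u01 n.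
move: h; rewrite distrC ger0_norm ?subr_ge0 ?(le_trans u1 (ltW L1)) //.
by rewrite ltrD2l ltrN2 ltNge u1.
Qed.

Lemma FP_le F u L y : free_ultrafilter F -> FP F u L -> F [set n | u n <= y] -> L <= y.
Proof.
move=> hF hL hy; rewrite leNgt; apply/negP => yL; apply: (fu_set0 hF).
apply: (fu_up hF (fu_I hF hy (hL (L - y) _))); first by rewrite subr_gt0.
move=> n /= [h1 h2]; move: h2; rewrite distrC ger0_norm ?subr_ge0 ?(le_trans h1 (ltW yL)) //.
by rewrite ltrD2l ltrN2 ltNge h1.
Qed.

Lemma FP_ge F u L y : free_ultrafilter F -> FP F u L -> F [set n | y <= u n] -> y <= L.
Proof.
move=> hF hL hy; rewrite leNgt; apply/negP => yL; apply: (fu_set0 hF).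
apply: (fu_up hF (fu_I hF hy (hL (y - L) _))); first by rewrite subr_gt0.
move=> n /= [h1 h2]; move: h2; rewrite ger0_norm ?subr_ge0 ?(le_trans (ltW yL) h1) //.
by rewrite ltrD2r ltNge h1.
Qed.

End Flim.

Arguments FP {R}.
Arguments FP_unique {R F u L1 L2}.
Arguments FP_exists {R F u}.
Arguments FlimE {R F u L}.
Arguments FP_cvg {R F u l}.
Arguments FP_add {R F u v a b}.
Arguments FP_01 {R F u L}.
Arguments FP_le {R F u L y}.
Arguments FP_ge {R F u L y}.

Section FinU.
Import finmap.

Lemma finite_nat_bound (S : set nat) : finite_set S -> exists N, forall n, S n -> (n < N)%N.
Proof.
move=> fS; exists (\max_(i <- (fset_set S : seq nat)) i).+1 => n Sn; rewrite ltnS.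
apply: (@leq_bigmax_seq _ _ xpredT id) => //.
by rewrite (in_fset_set fS); apply/mem_set.
Qed.

Lemma exists_fu (S : set nat) : (forall N, exists2 n, (N <= n)%N & S n) ->
  exists F, free_ultrafilter F /\ F S.
Proof.
move=> Sinf.
pose B := filter_from setT (fun N => S `&` [set n | (N <= n)%N]).
have FB : Filter B.
  apply: filter_fromT_filter; first by exists 0%N.
  move=> i j; exists (maxn i j) => n /= [Sn]; rewrite geq_max => /andP[hi hj].
  by split; split.
have PB : ProperFilter B.
  apply: filter_from_proper => N _; have [n Nn Sn] := Sinf N; by exists n.
have [G [UG BG]] := ultraFilterLemma PB.
have PG : ProperFilter G by apply: ultra_proper.
have GN : forall N, G [set n | (N <= n)%N].
  move=> N; apply: BG; exists N => //; by move=> n [].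
exists G; split; last first.
  apply: BG; exists 0%N => //; by move=> n [].
split.
- exact: filter_not_empty.
- exact: filterT.
- by move=> S1 T1 HS HST; apply: filterS HST HS.
- by move=> S1 T1; apply: filterI.
- split; first by move=> S1; apply: in_ultra_setVsetC.
  move=> S1 /finite_nat_bound [N HN] GS1; apply: (@filter_not_empty _ G PG).
  apply: (filterS _ (filterI GS1 (GN N))) => n /= [/HN].
  by rewrite ltnNge => /negP.
Qed.

End FinU.

Section Abel.
Variable R : realType.

Definition psum (d : nat -> R) n := \sum_(k < n) d k.

Lemma psumS d n : psum d n.+1 = psum d n + d n.
Proof. by rewrite /psum big_ord_recr. Qed.

Lemma abel (d w : nat -> R) n :
  \sum_(k < n.+1) d k * w k =
  psum d n.+1 * w n + \sum_(k < n) psum d k.+1 * (w k - w k.+1).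
Proof.
elim: n => [|n IH].
  by rewrite big_ord_recr big_ord0 /= big_ord0 /psum big_ord_recr big_ord0 /=; ring.
rewrite big_ord_recr /= IH [in RHS]big_ord_recr /= (psumS d n.+1); ring.
Qed.

Lemma psum_mono (t : nat -> R) m K : (m <= K)%N -> (forall k, 0 <= t k) ->
  \sum_(k < m) t k <= \sum_(k < K) t k.
Proof.
move=> mK t0; rewrite -[X in X <= _](big_mkord xpredT) -[X in _ <= X](big_mkord xpredT).
by rewrite (big_cat_nat (leq0n m) mK) /= lerDl sumr_ge0.
Qed.

Lemma psum_cut (t : nat -> R) n K : (K <= n)%N ->
  \sum_(k < n) (if (k < K)%N then t k else 0) = \sum_(k < K) t k.
Proof.
move=> Kn; rewrite -(big_mkord xpredT (fun k => if (k < K)%N then t k else 0)) -(big_mkord xpredT t).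
rewrite (big_cat_nat (leq0n K) Kn) /=.
rewrite [X in _ + X]big_nat_cond [X in _ + X]big1 ?addr0; last first.
  by move=> k /andP[/andP[Kk _] _]; rewrite ltnNge Kk.
by apply: eq_big_nat => k /andP[_ ->].
Qed.


Lemma psum_ge0 (w : nat -> R) n : (forall k, 0 <= w k) -> 0 <= psum w n.
Proof. by move=> w0; apply: sumr_ge0 => k _. Qed.

Lemma psum1 n : psum (fun _ => 1) n = n%:R.
Proof. by rewrite /psum sumr_const card_ord. Qed.

Lemma weighted_cvg (d w : nat -> R) (M s : R) :
  (forall k, 0 < w k) ->
  `|s| <= 1 ->
  (forall k, `|w k - w k.+1| = s * (w k - w k.+1)) ->
  (forall n, n.+1%:R * w n <= M * psum w n.+1) ->
  (forall B, exists N, forall n, (N <= n)%N -> B <= psum w n.+1) ->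
  (fun n => psum d n.+1 / n.+1%:R) @ \oo --> (0:R) ->
  (fun n => (\sum_(k < n.+1) d k * w k) / psum w n.+1) @ \oo --> (0:R).
Proof.
move=> w0 s1 ws HM Hdiv he.
have wge0 k : 0 <= w k by exact: ltW.
have W0 n : 0 < psum w n.+1.
  by rewrite psumS; have := @psum_ge0 w n wge0; have := w0 n; lra.
have M1 : 1 <= M.
  have := HM 0%N; rewrite psumS /psum big_ord0 add0r mul1r => h.
  have := w0 0%N; nra.
apply/cvgrPdist_le => eta eta0.
pose Q := 1 + 2 * M.
have Q0 : 0 < Q by rewrite /Q; lra.
have [eps [eps0 epsQ]] : exists eps, 0 < eps /\ eps * Q = eta / 2.
  exists (eta / (2 * Q)); split; first by rewrite divr_gt0 // mulr_gt0.
  by field; rewrite gt_eqF.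
move/cvgrPdist_le: he => /(_ eps eps0) [K _ HK].
have He k : (K <= k)%N -> `|psum d k.+1| <= eps * k.+1%:R.
  move=> /HK /=; rewrite sub0r normrN normrM normfV (ger0_norm (ler0n _ _)).
  by rewrite ler_pdivrMr // ltr0Sn.
pose C := \sum_(k < K) `|psum d k.+1| * `|w k - w k.+1|.
have C0 : 0 <= C by apply: sumr_ge0 => k _; rewrite mulr_ge0.
have [N0 HN0] := Hdiv (2 * C / eta).
exists (maxn N0 K) => // n /=; rewrite geq_max => /andP[hN0 hK].
have HW := HN0 n hN0.
rewrite sub0r normrN normrM normfV (gtr0_norm (W0 n)) ler_pdivrMr // abel.
set W := psum w n.+1.
set T := \sum_(k < n) _.
have h1 : `|psum d n.+1 * w n| <= eps * M * W.
  rewrite normrM (gtr0_norm (w0 n)).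
  apply: (le_trans (ler_wpM2r (wge0 n) (He n hK))).
  by rewrite -!mulrA ler_wpM2l ?(ltW eps0) //; apply: HM.
have h2 : \sum_(k < n) (k.+1%:R * `|w k - w k.+1|) <= (1 + M) * W.
  have ab := abel (fun _ => 1) w n.
  under eq_bigr do rewrite ws mulrCA.
  rewrite -mulr_sumr.
  have -> : \sum_(i < n) i.+1%:R * (w i - w i.+1) = W - n.+1%:R * w n.
    have eW : W = \sum_(k < n.+1) 1 * w k by apply: eq_bigr => k _; rewrite mul1r.
    rewrite eW ab psum1; under [X in _ = _ + X - _]eq_bigr do rewrite psum1.
    by rewrite addrAC subrr add0r.
  apply: (le_trans (ler_norm _)); rewrite normrM.
  apply: (le_trans (ler_wpM2r (normr_ge0 _) s1)); rewrite mul1r.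
  apply: (le_trans (ler_normB _ _)); rewrite (gtr0_norm (W0 n)).
  rewrite normrM (ger0_norm (ler0n _ _)) (gtr0_norm (w0 n)).
  have := HM n; rewrite -/W; lra.
have h3 : `|T| <= eps * ((1 + M) * W) + C.
  apply: (le_trans (ler_norm_sum _ _ _)).
  apply: (le_trans (y := \sum_(k < n) (eps * (k.+1%:R * `|w k - w k.+1|) +
     (if (k < K)%N then `|psum d k.+1| * `|w k - w k.+1| else 0)))).
    apply: ler_sum => k _; rewrite normrM.
    case: ltnP => kK.
      by rewrite lerDr mulr_ge0 ?mulr_ge0 ?(ltW eps0).
    rewrite addr0 mulrA; apply: ler_wpM2r => //; exact: He.
  rewrite big_split /= (psum_cut (fun k => `|psum d k.+1| * `|w k - w k.+1|) _ _ hK) -mulr_sumr lerD2r.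
  by apply: ler_wpM2l => //; exact: ltW.
have hCW : C <= eta / 2 * W.
  move: HW; rewrite ler_pdivrMr // => h.
  have : 2 * C <= W * eta by [].
  nra.
apply: (le_trans (ler_normD _ _)).
have : eps * M * W + (eps * ((1 + M) * W) + C) <= eta * W.
  have -> : eps * M * W + (eps * ((1 + M) * W) + C) = eps * Q * W + C.
    by rewrite /Q; ring.
  rewrite epsQ; lra.
lra.
Qed.

End Abel.
Arguments psum {R}.
Arguments weighted_cvg {R d w M s}.

Section Weighted.
Variable R : realType.

Definition wt (alpha : R) (k : nat) : R := k.+1%:R `^ alpha.

Lemma wt_gt0 alpha k : 0 < wt alpha k.
Proof. by rewrite /wt powR_gt0 // ltr0Sn. Qed.

Lemma powR_anti (a b r : R) : 0 < a -> a <= b -> r <= 0 -> b `^ r <= a `^ r.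
Proof.
move=> a0 ab r0; have b0 : 0 < b := lt_le_trans a0 ab.
rewrite /powR !gt_eqF // ler_expR ler_wnM2l // ler_ln // posrE.
Qed.

Lemma powR_mono (a b r : R) : 0 <= a -> a <= b -> 0 <= r -> a `^ r <= b `^ r.
Proof.
move=> a0 ab r0; apply: ge0_ler_powR => //; rewrite nnegrE //.
exact: le_trans ab.
Qed.

Lemma Nsum_psum alpha n : Nsum alpha n = psum (wt alpha) n.
Proof. by []. Qed.

Lemma wt_anti alpha j k : alpha <= 0 -> (j <= k)%N -> wt alpha k <= wt alpha j.
Proof. by move=> a0 jk; rewrite /wt powR_anti // ?ltr0Sn // ler_nat. Qed.

Lemma wt_mono alpha j k : 0 <= alpha -> (j <= k)%N -> wt alpha j <= wt alpha k.
Proof. by move=> a0 jk; rewrite /wt powR_mono // ler_nat. Qed.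

Lemma wt_sign alpha : exists2 s : R, `|s| <= 1 &
  forall k, `|wt alpha k - wt alpha k.+1| = s * (wt alpha k - wt alpha k.+1).
Proof.
have [a0|a0] := leP 0 alpha.
  exists (-1); first by rewrite normrN normr1.
  move=> k; rewrite mulN1r ler0_norm // subr_le0; exact: wt_mono.
exists 1; first by rewrite normr1.
move=> k; rewrite mul1r ger0_norm // subr_ge0; apply: wt_anti => //; exact: ltW.
Qed.

Lemma wt_HM alpha : exists M, forall n,
  n.+1%:R * wt alpha n <= M * psum (wt alpha) n.+1.
Proof.
have [a0|a0] := leP 0 alpha; last first.
  exists 1 => n; rewrite mul1r /psum.
  have -> : n.+1%:R * wt alpha n = \sum_(k < n.+1) wt alpha n.
    by rewrite sumr_const card_ord mulr_natl.
  apply: ler_sum => k _; apply: wt_anti; [exact: ltW|].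
  by rewrite -ltnS.
pose c := (2^-1 : R) `^ alpha.
have c0 : 0 < c by rewrite /c powR_gt0.
exists (2 / c) => n.
pose h := n.+1%:R / 2 : R.
have key : n.+1%:R * (wt alpha n * c) <= 2 * psum (wt alpha) n.+1.
  have -> : wt alpha n * c = h `^ alpha.
    by rewrite /wt /c /h -powRM // invr_ge0.
  have -> : 2 * psum (wt alpha) n.+1 =
      \sum_(k < n.+1) (wt alpha k + wt alpha (n - k)).
    rewrite big_split /= mulr_natl mulr2n.
    congr (_ + _).
    rewrite /psum -(big_mkord xpredT (wt alpha)) big_rev_mkord subn0.
    by apply: eq_bigr => k _; rewrite subSS.
  have -> : n.+1%:R * h `^ alpha = \sum_(k < n.+1) h `^ alpha.
    by rewrite sumr_const card_ord mulr_natl.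
  apply: ler_sum => k _.
  have hk := ltn_ord k.
  have w1 := wt_gt0 alpha k; have w2 := wt_gt0 alpha (n - k).
  have [hk2|hk2] := leqP n.+1 (k.+1 * 2).
    have : h `^ alpha <= wt alpha k.
      rewrite /wt powR_mono // /h ?divr_ge0 //.
      by rewrite ler_pdivrMr // -natrM ler_nat.
    lra.
  have : h `^ alpha <= wt alpha (n - k).
    rewrite /wt powR_mono // /h ?divr_ge0 //.
    rewrite ler_pdivrMr // -natrM ler_nat.
    rewrite -subSn; last by rewrite -ltnS.
    by move: hk2 hk; clear; lia.
  lra.
by rewrite mulrAC ler_pdivlMr // -mulrA.
Qed.

Lemma harmonic_unbounded (B : R) : exists n, B < psum (fun k => k.+1%:R^-1) n.
Proof.
apply: contrapT => hb; apply: (@dvg_harmonic R).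
apply: nondecreasing_is_cvgn.
  by apply: nondecreasing_series => k _ _; rewrite invr_ge0.
exists B => _ [n _ <-]; rewrite leNgt; apply/negP => hn; apply: hb; exists n.
by rewrite /psum -(big_mkord xpredT (fun k => k.+1%:R^-1 : R)); exact: hn.
Qed.

Lemma wt_div alpha : -1 <= alpha ->
  forall B, exists N, forall n, (N <= n)%N -> B <= psum (wt alpha) n.+1.
Proof.
move=> am1 B; have [a0|a0] := leP 0 alpha.
  exists (Num.bound `|B|) => n hn.
  have h1 := archi_boundP (normr_ge0 B).
  apply: (le_trans (ler_norm B)); apply: (le_trans (ltW h1)).
  apply: (@le_trans _ _ (n.+1%:R)); first by rewrite ler_nat; apply: leqW.
  have -> : n.+1%:R = \sum_(k < n.+1) (1 : R) by rewrite sumr_const card_ord.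
  rewrite /psum.
  apply: ler_sum => k _; rewrite /wt.
  by rewrite -[X in X <= _](powRr0 (k.+1%:R : R)) ler_powR // ler1n.
have [N HN] := harmonic_unbounded B.
exists N => n hn; apply: (le_trans (ltW HN)).
apply: (@le_trans _ _ (psum (fun k => k.+1%:R^-1) n.+1)).
  by apply: psum_mono => [|k]; [apply: leqW | rewrite invr_ge0].
by apply: ler_sum => k _; rewrite /wt -powR_inv1 // ler_powR // ler1n.
Qed.

Lemma wsum_ge0 E (alpha : R) n : 0 <= wsum E alpha n.
Proof. by apply: sumr_ge0 => k _; rewrite mulr_ge0 // powR_ge0. Qed.

Lemma wsum_le E (alpha : R) n : wsum E alpha n <= Nsum alpha n.
Proof.
apply: ler_sum => k _; rewrite indicE.
by case: (_ \in _); rewrite ?mul1r ?mul0r ?powR_ge0.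
Qed.

Lemma ratio01 E (alpha : R) n : 0 <= ratio E alpha n <= 1.
Proof.
have W0 : 0 < Nsum alpha n.+1.
  rewrite Nsum_psum psumS; have := wt_gt0 alpha n.
  have := @psum_ge0 R (wt alpha) n (fun k => ltW (wt_gt0 alpha k)); lra.
rewrite /ratio divr_ge0 ?wsum_ge0 ?(ltW W0) //=.
by rewrite ler_pdivrMr // mul1r wsum_le.
Qed.

Lemma ratio_setT (alpha : R) n : ratio setT alpha n = 1.
Proof.
have W0 : 0 < Nsum alpha n.+1.
  rewrite Nsum_psum psumS; have := wt_gt0 alpha n.
  have := @psum_ge0 R (wt alpha) n (fun k => ltW (wt_gt0 alpha k)); lra.
rewrite /ratio /wsum (_ : \sum_(k < n.+1) _ = Nsum alpha n.+1) ?divff ?gt_eqF //.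
by apply: eq_bigr => k _; rewrite indicE mem_set // mul1r.
Qed.

Lemma ratio_U E1 E2 (alpha : R) n : E1 `&` E2 = set0 ->
  ratio (E1 `|` E2) alpha n = ratio E1 alpha n + ratio E2 alpha n.
Proof.
move=> dis; rewrite /ratio -mulrDl; congr (_ / _).
rewrite /wsum -big_split /=; apply: eq_bigr => k _; rewrite -mulrDl.
congr (_ * _); move: (nat_of_ord k) => j; rewrite !indicE.
have [h1|h1] := boolP (j \in E1); have [h2|h2] := boolP (j \in E2).
- exfalso; move: h1 h2; rewrite !inE => h1 h2.
  by have : (E1 `&` E2) j by []; rewrite dis.
- by rewrite mem_set ?addr0 //; left; move: h1; rewrite inE.
- by rewrite mem_set ?add0r //; right; move: h2; rewrite inE.
- rewrite memNset ?addr0 //; move=> [] ?.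
  + by move: h1; rewrite mem_set.
  + by move: h2; rewrite mem_set.
Qed.

Theorem weighted_density E (l : R) (alpha : R) : -1 <= alpha ->
  has_density E l -> ratio E alpha @ \oo --> l.
Proof.
move=> am1 hd.
pose d k := (\1_E k : R) - l.
have [s s1 hs] := wt_sign alpha.
have [M HM] := wt_HM alpha.
have hdiv := @wt_div alpha am1.
have he : (fun n => psum d n.+1 / n.+1%:R) @ \oo --> (0:R).
  have -> : (fun n => psum d n.+1 / n.+1%:R) =
     (fun n => counting R E n.+1 / n.+1%:R - l).
    apply: funext => n; rewrite /psum /d sumrB sumr_const card_ord /counting.
    by rewrite mulrBl -[l *+ _]mulr_natr mulfK ?pnatr_eq0.
  rewrite -(subrr l); apply: cvgB => //; exact: cvg_cst.
have hw := weighted_cvg (wt_gt0 alpha) s1 hs HM hdiv he.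
have := cvgD hw (cvg_cst l); rewrite add0r.
move=> H.
suff -> : ratio E alpha = ((fun n => (\sum_(k < n.+1) d k * wt alpha k) / psum (wt alpha) n.+1) + (fun _ => l))%R.
  by apply: H; typeclasses eauto.
apply: funext => n /=.
have W0 : 0 < Nsum alpha n.+1.
  rewrite Nsum_psum psumS; have := wt_gt0 alpha n.
  have := @psum_ge0 R (wt alpha) n (fun k => ltW (wt_gt0 alpha k)); lra.
have eS : \sum_(k < n.+1) d k * wt alpha k = wsum E alpha n.+1 - l * Nsum alpha n.+1.
  by rewrite /wsum Nsum_psum /psum mulr_sumr -sumrB; apply: eq_bigr => k _; rewrite /d mulrBl.
change (ratio E alpha n = (\sum_(k < n.+1) d k * wt alpha k) / psum (wt alpha) n.+1 + l).
rewrite eS -Nsum_psum /ratio; field.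
by rewrite gt_eqF.
Qed.

End Weighted.
Arguments wt {R}.
Arguments wt_gt0 {R}.
Arguments ratio01 {R}.
Arguments ratio_setT {R}.
Arguments ratio_U {R}.
Arguments weighted_density {R}.

Section Points.
Variable R : realType.

Lemma ratio_bounded (E : set nat) (a : R) : bounded_fun (ratio E a).
Proof.
rewrite /bounded_near; near=> M => n _ /=.
have /andP[h0 h1] := ratio01 E a n.
rewrite ger0_norm // (le_trans h1) //; near: M; exact: nbhs_pinfty_ge.
Unshelve. all: end_near. Qed.

Lemma lower_freq {A : set nat} {a y : R} : lower_d a A < y ->
  forall N, exists2 n, (N <= n)%N & ratio A a n < y.
Proof.
move=> hy N; apply: contrapT => hn.
have hge : forall n, (N <= n)%N -> y <= ratio A a n.
  move=> n Nn; rewrite leNgt; apply/negP => h; apply: hn; by exists n.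
move: hy; apply/negP; rewrite -leNgt /lower_d limn_infE; last exact: ratio_bounded.
apply: (@le_trans _ _ (infs (ratio A a) N)).
  rewrite /infs /=; apply: lb_le_inf; first by exists (ratio A a N), N => /=.
  by move=> _ [n /= Nn <-]; apply: hge.
apply: ub_le_sup; last by exists N.
exact: bounded_fun_has_ubound_infs (ratio_bounded A a).
Qed.

Lemma upper_freq {A : set nat} {a y : R} : y < upper_d a A ->
  forall N, exists2 n, (N <= n)%N & y < ratio A a n.
Proof.
move=> hy N; apply: contrapT => hn.
have hle : forall n, (N <= n)%N -> ratio A a n <= y.
  move=> n Nn; rewrite leNgt; apply/negP => h; apply: hn; by exists n.
move: hy; apply/negP; rewrite -leNgt /upper_d limn_supE; last exact: ratio_bounded.
apply: (@le_trans _ _ (sups (ratio A a) N)).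
  apply: ge_inf; last by exists N.
  exact: bounded_fun_has_lbound_sups (ratio_bounded A a).
rewrite /sups /=; apply: ge_sup; first by exists (ratio A a N), N => /=.
by move=> _ [n /= Nn <-]; apply: hle.
Qed.

Lemma Flim_FP {F} (E : set nat) (a : R) : free_ultrafilter F ->
  FP F (ratio E a) (Flim F (ratio E a)).
Proof.
move=> hF; have [L hL] := FP_exists hF (ratio01 E a).
by rewrite (FlimE hF hL).
Qed.

Lemma pt_low (A : set nat) (x : R) : lower_d_infty R A < x ->
  exists a F, [/\ -1 <= a, free_ultrafilter F & Flim F (ratio A a) < x].
Proof.
move=> hx.
have [_ [a a1 <-] va] := inf_lt (ex_intro _ (lower_d (-1) A) (ex_intro2 _ _ (-1) (lexx (-1 : R)) erefl)) hx.
pose y := (lower_d a A + x) / 2.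
have hy1 : lower_d a A < y by rewrite /y; lra.
have hy2 : y < x by rewrite /y; lra.
have [F [hF FS]] := exists_fu _ (lower_freq hy1).
exists a, F; split => //.
apply: (le_lt_trans _ hy2); apply: (FP_le hF (Flim_FP A a hF)).
by apply: (fu_up hF FS) => n /= /ltW.
Qed.

Lemma pt_high (A : set nat) (x : R) : x < upper_d_infty R A ->
  exists a F, [/\ -1 <= a, free_ultrafilter F & x < Flim F (ratio A a)].
Proof.
move=> hx.
have [_ [a a1 <-] va] := sup_gt (ex_intro _ (upper_d (-1) A) (ex_intro2 _ _ (-1) (lexx (-1 : R)) erefl)) hx.
pose y := (upper_d a A + x) / 2.
have hy1 : y < upper_d a A by rewrite /y; lra.
have hy2 : x < y by rewrite /y; lra.
have [F [hF FS]] := exists_fu _ (upper_freq hy1).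
exists a, F; split => //.
apply: (lt_le_trans hy2); apply: (FP_ge hF (Flim_FP A a hF)).
by apply: (fu_up hF FS) => n /= /ltW.
Qed.

Variables (F : set (set nat)) (a : R).
Hypotheses (hF : free_ultrafilter F) (ha : -1 <= a).

Lemma pt_01 E : 0 <= Flim F (ratio E a) <= 1.
Proof. exact: FP_01 hF (ratio01 E a) (Flim_FP E a hF). Qed.

Lemma pt_T : Flim F (ratio setT a) = 1.
Proof.
apply: FlimE => // eps ep; apply: (fu_up hF (fu_setT hF)) => n _ /=.
by rewrite ratio_setT subrr normr0.
Qed.

Lemma pt_U E1 E2 : E1 `&` E2 = set0 ->
  Flim F (ratio (E1 `|` E2) a) = Flim F (ratio E1 a) + Flim F (ratio E2 a).
Proof.
move=> dis; apply: FlimE => //.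
have := FP_add hF (Flim_FP E1 a hF) (Flim_FP E2 a hF).
move=> H eps ep; apply: (fu_up hF (H eps ep)) => n /=.
by rewrite ratio_U.
Qed.

Lemma pt_d E l : has_density E l -> Flim F (ratio E a) = l.
Proof.
move=> hd; apply: FlimE => //; apply: FP_cvg => //.
exact: weighted_density.
Qed.

End Points.

Section Mix.
Import HBNNSimple.
Context d (T : measurableType d) (R : realType).
Variables (a1 a2 : T) (t1 t2 : R) (h1 : 0 <= t1) (h2 : 0 <= t2).

Definition mix := measure_add (mscale (NngNum h1) (@dirac _ T a1 R))
                              (mscale (NngNum h2) (@dirac _ T a2 R)).

Lemma mixE A : mix A = (t1 * \1_A a1 + t2 * \1_A a2)%:E.
Proof. rewrite /mix measure_addE; change ((t1%:E * \d_a1 A + t2%:E * \d_a2 A)%E = (t1 * \1_A a1 + t2 * \1_A a2)%:E); rewrite /dirac -!EFinM -EFinD. done. Qed.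

Lemma sint_mix (h : {nnsfun T >-> R}) : sintegral mix h = (t1 * h a1 + t2 * h a2)%:E.
Proof.
have := integral_nnsfun mix (@measurableT _ T) h; rewrite patch_setT => <-.
have mh : measurable_fun [set: T] (EFin \o h).
  by apply/measurable_EFinP; exact: measurable_funPT.
have h0 : forall x, setT x -> (0 <= (h x)%:E)%E by move=> x _; rewrite lee_fin.
rewrite /mix ge0_integral_measure_add //.
rewrite !ge0_integral_mscale // !integral_dirac //.
by rewrite !diracT !mul1e -!EFinM -EFinD.
Qed.

Lemma int_mix (D : set T) (g : T -> R) : measurable D -> D a1 -> D a2 -> a1 != a2 ->
  measurable [set a1] -> measurable [set a2] -> (forall x, D x -> 0 <= g x) ->
  (\int[mix]_(x in D) (g x)%:E = (t1 * g a1 + t2 * g a2)%:E)%E.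
Proof.
move=> mD Da1 Da2 a12 m1 m2 g0.
rewrite ge0_integralE; last by move=> x Dx; rewrite lee_fin g0.
apply/eqP; rewrite eq_le; apply/andP; split.
  apply: ge_ereal_sup => _ [h hle <-]; rewrite sint_mix lee_fin.
  have := hle a1; have := hle a2; rewrite /patch !mem_set // !lee_fin => e2 e1.
  by rewrite lerD // ler_wpM2l.
apply: ereal_sup_ubound => /=.
pose k1 := scale_nnsfun (indic_nnsfun R m1) (g0 _ Da1).
pose k2 := scale_nnsfun (indic_nnsfun R m2) (g0 _ Da2).
have hv : forall x, add_nnsfun k1 k2 x = g a1 * (x == a1)%:R + g a2 * (x == a2)%:R.
  move=> x /=; rewrite /mindic !indicE.
  have e1 : (x \in [set a1]) = (x == a1).
    by apply/idP/eqP => [/set_mem|->] //; exact: mem_set.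
  have e2 : (x \in [set a2]) = (x == a2).
    by apply/idP/eqP => [/set_mem|->] //; exact: mem_set.
  by rewrite e1 e2.
exists (add_nnsfun k1 k2).
  move=> x; rewrite hv /patch.
  have [->|xa1] := eqVneq x a1.
    by rewrite mem_set // (negbTE a12) mulr1 mulr0 addr0.
  have [->|xa2] := eqVneq x a2.
    by rewrite mem_set // mulr1 mulr0 add0r.
  rewrite !mulr0 addr0; case: ifPn => [/set_mem Dx|_]; first by rewrite lee_fin g0.
  by [].
rewrite sint_mix !hv !eqxx (negbTE a12) eq_sym (negbTE a12).
by rewrite !mulr1 !mulr0 addr0 add0r.
Qed.

End Mix.

Lemma mnormalize1 d (T : measurableType d) (R : realType) (mu : {measure set T -> \bar R})
  (P : probability T R) (S : set T) : mu setT = 1%E -> mnormalize mu P S = mu S.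
Proof.
by move=> h; rewrite /mnormalize h /= eqe oner_eq0 /= invr1 mule1.
Qed.

Section Main.
Variable R : realType.

Lemma OmG_meas (U : set (Amb R)) : OmegaG U -> measurable (U : set (OmegaT R)).
Proof. by move=> hU; exact: sub_sigma_algebra. Qed.

Lemma Omega_meas : measurable (@OmegaSet R : set (OmegaT R)).
Proof.
apply: OmG_meas; rewrite /OmegaG /= setIid; split => // w Ow.
exists setT, (w.2 - 1), (w.2 + 1); split; last by move=> v [].
split => //; split; first by case: Ow => hF _; exact: fu_setT hF.
by apply/andP; split; lra.
Qed.

Lemma ultra_sep (F G : set (set nat)) : free_ultrafilter F -> free_ultrafilter G ->
  F <> G -> exists E, F E /\ ~ G E.
Proof.
move=> hF hG FG; apply: contrapT => H; apply: FG.
have FsubG : forall E, F E -> G E.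
  move=> E FE; apply: contrapT => nGE; apply: H; by exists E.
apply/funext => E; apply/propext; split; first exact: FsubG.
move=> GE; apply: contrapT => nFE.
have FC : F (~` E) by case: (fu_C E hF).
apply: (fu_set0 hG); rewrite -(setICr E); exact: fu_I hG GE (FsubG _ FC).
Qed.

Lemma single_meas (a : Amb R) : @OmegaSet R a -> measurable ([set a] : set (OmegaT R)).
Proof.
move=> Oa.
have hU : OmegaG (~` [set a]).
  split; first by move=> w [].
  case=> F1 r1 [/= wa Ow].
  have [eF|nF] := pselect (F1 = a.1).
    have r1a : r1 != a.2.
      apply/eqP => er; apply: wa; case: a Oa eF er => /= ? ? _ -> ->; done.
    have hF1 : F1 setT by case: Ow => /= hF _; exact: fu_setT hF.
    have [lt1|gt1] := ltP r1 a.2.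
      exists setT, (r1 - 1), a.2; split.
        by split => //; split => //=; apply/andP; split => //; lra.
      move=> v [Ov [_ /andP[_ hv]]]; split => // /= va; move: hv; rewrite va ltxx.
      done.
    have gt1' : a.2 < r1 by rewrite lt_neqAle eq_sym r1a gt1.
    exists setT, a.2, (r1 + 1); split.
      by split => //; split => //=; apply/andP; split => //; lra.
    move=> v [Ov [_ /andP[hv _]]]; split => // /= va; move: hv; rewrite va ltxx.
    done.
  have [E [F1E naE]] := ultra_sep _ _ (proj1 Ow) (proj1 Oa) nF.
  exists E, (r1 - 1), (r1 + 1); split.
    by split => //; split => //=; apply/andP; split; lra.
  move=> v [Ov [vE _]]; split => // /= va; apply: naE; by rewrite -va.
have -> : [set a] = @OmegaSet R `&` ~` (~` [set a]).
  rewrite setCK; apply/seteqP; split => v; first by move=> /= ->.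
  by move=> [].
apply: measurableI; first exact: Omega_meas.
by apply: measurableC; exact: OmG_meas.
Qed.

End Main.

Theorem theorem4p4 (R : realType) (A : set nat) (x : R) :
  lower_d_infty R A < x < upper_d_infty R A ->
  exists (psi : probability (OmegaT R) R) (mu : set nat -> R),
    [/\ psi (@OmegaSet R) = 1%E,
        (forall E : set nat,
            (\int[psi]_(w in @OmegaSet R) (muFa w E)%:E)%E = (mu E)%:E),
        density_measure mu &
        mu A = x].
Proof.
move=> /andP[hl hu].
have [a1 [F1 [ha1 hF1 hb1]]] := @pt_low R A x hl.
have [a2 [F2 [ha2 hF2 hb2]]] := @pt_high R A x hu.
set b1 := Flim F1 (ratio A a1) in hb1.
set b2 := Flim F2 (ratio A a2) in hb2.
have b12 : 0 < b2 - b1 by rewrite subr_gt0 (lt_trans hb1 hb2).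
pose t1 := (b2 - x) / (b2 - b1).
pose t2 := (x - b1) / (b2 - b1).
have h1 : 0 <= t1 by rewrite /t1 divr_ge0 // ?(ltW b12) // subr_ge0 ltW.
have h2 : 0 <= t2 by rewrite /t2 divr_ge0 // ?(ltW b12) // subr_ge0 ltW.
have ht : t1 + t2 = 1 by rewrite /t1 /t2 -mulrDl addrA subrK divff // gt_eqF.
have hx : t1 * b1 + t2 * b2 = x.
  rewrite /t1 /t2; field; by rewrite gt_eqF.
pose w1 : OmegaT R := (F1, a1).
pose w2 : OmegaT R := (F2, a2).
have Ow1 : @OmegaSet R w1 by split.
have Ow2 : @OmegaSet R w2 by split.
have w12 : w1 != w2.
  apply/eqP => e; have : b1 = b2 by rewrite /b1 /b2; case: e => -> ->.
  by move=> e2; move: b12; rewrite e2 subrr ltxx.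
pose m := @mix _ _ R w1 w2 _ _ h1 h2.
have mT : m setT = 1%E by rewrite /m mixE !indicE !mem_set // !mulr1 ht.
pose psi := mnormalize m (@dirac _ _ w1 R).
have psiE : forall S, psi S = m S.
  by move=> S; rewrite /psi mnormalize1.
exists psi, (fun E => t1 * muFa w1 E + t2 * muFa w2 E).
split.
- transitivity (m (@OmegaSet R)); first exact: psiE.
  by rewrite /m mixE !indicE !mem_set // !mulr1 ht.
- move=> E; rewrite (eq_measure_integral m); last by move=> S _ _; exact: psiE.
  rewrite int_mix //.
  + exact: Omega_meas.
  + exact: single_meas.
  + exact: single_meas.
  + by move=> w [hw _]; have /andP[] := @pt_01 R w.1 w.2 hw E.
- split.
  + move=> E; have /andP[e1 e1'] := @pt_01 R F1 a1 hF1 E.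
    have /andP[e2 e2'] := @pt_01 R F2 a2 hF2 E.
    rewrite /muFa /=; apply/andP; split; first by rewrite addr_ge0 // mulr_ge0.
    nra.
  + by rewrite /muFa /= (@pt_T R F1 a1 hF1) (@pt_T R F2 a2 hF2) !mulr1.
  + move=> E1 E2 dis; rewrite /muFa /= (@pt_U R F1 a1 hF1 _ _ dis) (@pt_U R F2 a2 hF2 _ _ dis).
    ring.
  + move=> E l hd; rewrite /muFa /= (@pt_d R F1 a1 hF1 ha1 E l hd) (@pt_d R F2 a2 hF2 ha2 E l hd).
    by rewrite -mulrDl ht mul1r.
- exact: hx.
Qed.
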